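(* Let $N\ge3$ be odd, $l\in\{0,1\}$, and let $r\ge1$ be an integer with $r+l$ odd. Let $q$ be an integer with $0\le q\le (N-1)/2$, and set $h=2\pi/N$ and $\sigma_k(r)=[\sin(hk/2)/k]^{1+r}$. Define $C_k^{(l)}(r,N,j,t)$ and $H_k^{(l)}(r,N)$ as $$C_k^{(l)}(r,N,j,t)=\sigma_k(r)\cos k(t-t_j^{(l)})+\sum_{m=1}^{\infty}(-1)^{ml}\Bigl[\sigma_{mN+k}(r)\cos(mN+k)(t-t_j^{(l)})+\sigma_{mN-k}(r)\cos(mN-k)(t-t_j^{(l)})\Bigr],$$ $$H_k^{(l)}(r,N)=\sigma_k(r)+\sum_{m=1}^{\infty}(-1)^{ml}\bigl[\sigma_{mN+k}(r)+\sigma_{mN-k}(r)\bigr].$$ Define the fundamental trigonometric LS splines $$ts_{j,q}^{(l)}(r,t)=\frac1N\Bigl\{1+2\sum_{k=1}^{q}\frac{C_k^{(l)}(r,N,j,t)}{H_k^{(l)}(r,N)}\Bigr\},\qquad j=1,\dots,N,$$ and the fundamental trigonometric LS polynomials $$\varphi_{j,q}^{(l)}(t)=\frac1N\Bigl[1+2\sum_{k=1}^q\cos k(t-t_j^{(l)})\Bigr].$$ Then the following hold. 1. For all $i,j\in\{1,\dots,N\}$, $ts_{j,q}^{(l)}(r,t_i^{(l)})=\varphi_{j,q}^{(l)}(t_i^{(l)})$. 2. For any data $f_1,\dots,f_N$, the LS spline $Ts_{r,q}^{(l)}(t)=\sum_{j=1}^N f_j\,ts_{j,q}^{(l)}(r,t)$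 takes at each node $t_i^{(l)}$ the same value as the discrete least-squares trigonometric polynomial $T_q^{(l)}(t)=\sum_{j=1}^N f_j\varphi_{j,q}^{(l)}(t)$.
   Context: Uniform grids on $[0,2\pi]$: for $N$ odd and $j=1,\dots,N$, set $t_j^{(0)}=\frac{2\pi}{N}(j-1)$ and $t_j^{(1)}=\frac{\pi}{N}(2j-1)$. Under the hypothesis that $r+l$ is odd, all constants $H_k^{(l)}(r,N)$ are nonzero, so the definition of $ts_{j,q}^{(l)}$ makes sense. The polynomial $T_q^{(l)}$ coincides with the order-$q$ partial sum $\frac{a_0}{2}+\sum_{k=1}^q(a_k\cos kt+b_k\sin kt)$ of the discrete Fourier series, with coefficients $a_0=\frac2N\sum_j f_j$, $a_k=\frac2N\sum_j f_j\cos kt_j^{(l)}$, and $b_k=\frac2N\sum_j f_j\sin kt_j^{(l)}$. *)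

(* Defs.v *)
From Stdlib Require Import Reals Lra Lia ClassicalEpsilon.
Open Scope R_scope.

Fixpoint sumR (n : nat) (f : nat -> R) : R :=
  match n with
  | O => 0
  | S n' => sumR n' f + f (S n')
  end.

(* The sum of the series sum_{m>=1} u m (value chosen by classical epsilon
   among the limits; it is the true sum whenever the series converges). *)
Definition series1 (u : nat -> R) : R :=
  epsilon (inhabits 0) (fun s => infinite_sum (fun n => u (S n)) s).

Definition hstep (N : nat) : R := 2 * PI / INR N.

Definition node (l N j : nat) : R :=
  if Nat.eqb l 0 then 2 * PI / INR N * (INR j - 1)
  else PI / INR N * (2 * INR j - 1).

Definition sigma (N r k : nat) : R :=
  (sin (hstep N * INR k / 2) / INR k) ^ (1 + r).

Definition Ck (l r N j k : nat) (t : R) : R :=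
  sigma N r k * cos (INR k * (t - node l N j)) +
  series1 (fun m =>
    (-1) ^ (m * l) *
    (sigma N r (m * N + k) * cos (INR (m * N + k) * (t - node l N j)) +
     sigma N r (m * N - k) * cos (INR (m * N - k) * (t - node l N j)))).

Definition Hk (l r N k : nat) : R :=
  sigma N r k +
  series1 (fun m =>
    (-1) ^ (m * l) * (sigma N r (m * N + k) + sigma N r (m * N - k))).

Definition ts (l r N q j : nat) (t : R) : R :=
  / INR N * (1 + 2 * sumR q (fun k => Ck l r N j k t / Hk l r N k)).

Definition phi (l N q j : nat) (t : R) : R :=
  / INR N * (1 + 2 * sumR q (fun k => cos (INR k * (t - node l N j)))).

Definition Ts (l r N q : nat) (f : nat -> R) (t : R) : R :=
  sumR N (fun j => f j * ts l r N q j t).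

Definition Tq (l N q : nat) (f : nat -> R) (t : R) : R :=
  sumR N (fun j => f j * phi l N q j t).

(* Main.v *)
From Pilot Require Import Defs.
From Stdlib Require Import Reals.
From Stdlib Require Import Lra Lia ClassicalEpsilon FunctionalExtensionality.
From Coquelicot Require Import Coquelicot.
Import Pilot.Defs.
Open Scope R_scope.

Lemma sumR_ext n f g : (forall k, (1 <= k <= n)%nat -> f k = g k) -> sumR n f = sumR n g.
Proof.
  induction n; intros H; simpl; auto.
  rewrite IHn; [rewrite H; [reflexivity| lia]|].
  intros k Hk; apply H; lia.
Qed.

Lemma series1_ext u v : (forall n, u (S n) = v (S n)) -> series1 u = series1 v.
Proof.
  intros H. unfold series1.
  replace (fun n => v (S n)) with (fun n => u (S n)); auto.
  apply functional_extensionality; intros; auto.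
Qed.

Lemma series1_Series u : ex_series (fun n => u (S n)) ->
  series1 u = Series (fun n => u (S n)).
Proof.
  intros H. unfold series1.
  apply (uniqueness_sum (fun n => u (S n))).
  - apply epsilon_spec. exists (Series (fun n => u (S n))).
    apply is_series_Reals. apply Series_correct; auto.
  - apply is_series_Reals. apply Series_correct; auto.
Qed.

Lemma series1_spec u : ex_series (fun n => u (S n)) ->
  infinite_sum (fun n => u (S n)) (series1 u).
Proof.
  intros H. rewrite series1_Series; auto.
  apply is_series_Reals. apply Series_correct; auto.
Qed.

Lemma series1_scal c u : ex_series (fun n => u (S n)) ->
  series1 (fun m => c * u m) = c * series1 u.
Proof.
  intros H. rewrite !series1_Series; auto.
  - apply Series_scal_l.
  - apply (ex_series_ext (fun n => scal c (u (S n)))); auto.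
    exact (@ex_series_scal_l R_AbsRing R_NormedModule c (fun n => u (S n)) H).
Qed.

Lemma partial_inv_sq M : sum_f_R0 (fun n => / INR (S n) ^ 2) M <= 2 - / INR (S M).
Proof.
  induction M.
  - simpl. rewrite !Rmult_1_r, Rinv_1. lra.
  - rewrite tech5. rewrite (S_INR (S M)).
    assert (HM : 0 < INR (S M)) by (apply lt_0_INR; lia).
    set (x := INR (S M)) in *.
    assert (/ (x + 1) ^ 2 <= / x - / (x + 1)).
    { replace (/ x - / (x+1)) with (/ (x * (x+1))) by (field; lra).
      apply Rinv_le_contravar; nra. }
    lra.
Qed.

Lemma conv_inv_sq : ex_series (fun n => / INR (S n) ^ 2).
Proof.
  apply ex_series_Reals_1.
  apply growing_cv.
  - intros n. cbv beta. rewrite tech5. assert (0 < / INR (S (S n)) ^ 2).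
    { apply Rinv_0_lt_compat. apply pow_lt. apply lt_0_INR; lia. }
    lra.
  - exists 2. intros x [M ->]. pose proof (partial_inv_sq M).
    assert (0 < / INR (S M)) by (apply Rinv_0_lt_compat, lt_0_INR; lia). lra.
Qed.

Lemma pow_le1 a n : 0 <= a <= 1 -> a ^ n <= 1.
Proof.
  intros H. induction n; simpl; [lra|].
  assert (0 <= a ^ n) by (apply pow_le; lra). nra.
Qed.

Lemma sigma_abs N r K : (1 <= r)%nat -> (1 <= K)%nat ->
  Rabs (sigma N r K) <= / INR (S (K - 1)) ^ 2.
Proof.
  intros Hr HK. replace (S (K - 1)) with K by lia.
  unfold sigma. rewrite <- RPow_abs.
  assert (HK' : 0 < INR K) by (apply lt_0_INR; lia).
  set (y := hstep N * INR K / 2).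
  assert (Ha : Rabs (sin y / INR K) <= / INR K).
  { unfold Rdiv. rewrite Rabs_mult, Rabs_inv, (Rabs_pos_eq (INR K)) by lra.
    pose proof (Rabs_le (sin y) 1 (SIN_bound y)) as Hs.
    pose proof (Rinv_0_lt_compat _ HK').
    pose proof (Rabs_pos (sin y)). nra. }
  set (a := Rabs (sin y / INR K)) in *.
  assert (Ha0 : 0 <= a) by apply Rabs_pos.
  assert (Ha1 : a <= 1).
  { apply Rle_trans with (/ INR K); auto.
    rewrite <- Rinv_1. apply Rinv_le_contravar; [lra|].
    apply (le_INR 1); lia. }
  replace (1 + r)%nat with (2 + (r - 1))%nat by lia.
  rewrite pow_add.
  assert (a ^ (r - 1) <= 1) by (apply pow_le1; lra).
  assert (0 <= a ^ (r - 1)) by (apply pow_le; lra).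
  assert (a ^ 2 <= (/ INR K) ^ 2) by (apply pow_incr; lra).
  rewrite pow_inv in *.
  assert (0 <= a ^ 2) by (apply pow_le; lra).
  nra.
Qed.

Definition useq (l r N k m : nat) : R :=
  (-1) ^ (m * l) * (sigma N r (m * N + k) + sigma N r (m * N - k)).

Lemma inv_sq_mono a b : (1 <= a <= b)%nat -> / INR b ^ 2 <= / INR a ^ 2.
Proof.
  intros H. apply Rinv_le_contravar.
  - apply pow_lt. apply lt_0_INR; lia.
  - apply pow_incr. split; [apply pos_INR| apply le_INR; lia].
Qed.

Lemma useq_conv l r N k : (1 <= r)%nat -> (k < N)%nat ->
  ex_series (fun n => useq l r N k (S n)).
Proof.
  intros Hr Hk.
  apply (ex_series_le (K:=R_AbsRing) (V:=R_CompleteNormedModule) _ (fun n => 2 * / INR (S n) ^ 2)).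
  - intros n. change (Rabs (useq l r N k (S n)) <= 2 * / INR (S n) ^ 2).
    unfold useq. rewrite Rabs_mult, pow_1_abs, Rmult_1_l.
    eapply Rle_trans; [apply Rabs_triang|].
    pose proof (sigma_abs N r (S n * N + k) Hr ltac:(nia)).
    pose proof (sigma_abs N r (S n * N - k) Hr ltac:(nia)).
    pose proof (inv_sq_mono (S n) (S (S n * N + k - 1)) ltac:(nia)).
    pose proof (inv_sq_mono (S n) (S (S n * N - k - 1)) ltac:(nia)).
    lra.
  - apply (ex_series_ext (fun n => scal 2 (/ INR (S n) ^ 2))); [reflexivity|].
    exact (@ex_series_scal_l R_AbsRing R_NormedModule 2 _ conv_inv_sq).
Qed.

Lemma sin_mpi x m : sin (x + INR m * PI) = (-1) ^ m * sin x.
Proof.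
  induction m.
  - simpl. rewrite Rmult_0_l, Rplus_0_r. ring.
  - rewrite S_INR. replace (x + (INR m + 1) * PI) with ((x + INR m * PI) + PI) by ring.
    rewrite neg_sin, IHm. simpl. ring.
Qed.

Lemma sigma_k N r k : (1 <= N)%nat ->
  sigma N r k = (sin (PI * INR k / INR N) / INR k) ^ (1 + r).
Proof.
  intros HN. unfold sigma, hstep. f_equal. f_equal. f_equal.
  assert (0 < INR N) by (apply lt_0_INR; lia). field. lra.
Qed.

Lemma sigma_plus N r k m : (1 <= N)%nat -> (1 <= m)%nat ->
  sigma N r (m * N + k) =
  ((-1) ^ m * (sin (PI * INR k / INR N) / INR (m * N + k))) ^ (1 + r).
Proof.
  intros HN Hm. unfold sigma. f_equal.
  assert (0 < INR N) by (apply lt_0_INR; lia).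
  replace (hstep N * INR (m * N + k) / 2) with (PI * INR k / INR N + INR m * PI).
  - rewrite sin_mpi. unfold Rdiv. ring.
  - unfold hstep. rewrite plus_INR, mult_INR. field. lra.
Qed.

Lemma sigma_minus N r k m : (1 <= N)%nat -> (1 <= m)%nat -> (k <= m * N)%nat ->
  sigma N r (m * N - k) =
  ((-1) ^ m * (- (sin (PI * INR k / INR N) / INR (m * N - k)))) ^ (1 + r).
Proof.
  intros HN Hm Hk. unfold sigma. f_equal.
  assert (0 < INR N) by (apply lt_0_INR; lia).
  replace (hstep N * INR (m * N - k) / 2) with (- (PI * INR k / INR N) + INR m * PI).
  - rewrite sin_mpi, sin_neg. unfold Rdiv. ring.
  - unfold hstep. rewrite minus_INR, mult_INR by exact Hk. field. lra.
Qed.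

Lemma sign_sq m : (-1) ^ m * (-1) ^ m = 1.
Proof. induction m; simpl; [ring|]. replace (-1 * (-1) ^ m * (-1 * (-1) ^ m)) with ((-1) ^ m * (-1) ^ m) by ring. auto. Qed.

Lemma pow_even_sign e y n : e * e = 1 -> (e * y) ^ (2 * n) = y ^ (2 * n).
Proof.
  intros H. rewrite !pow_mult. f_equal.
  replace ((e * y) ^ 2) with ((e * e) * y ^ 2) by ring. rewrite H. ring.
Qed.

Lemma pow_odd_sign e y n : e * e = 1 -> (e * y) ^ (S (2 * n)) = e * y ^ (S (2 * n)).
Proof.
  intros H. change ((e * y) ^ (S (2 * n))) with ((e * y) * (e * y) ^ (2 * n)).
  change (y ^ (S (2 * n))) with (y * y ^ (2 * n)).
  rewrite pow_even_sign by auto. ring.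
Qed.

Lemma pow_lt_S x y n : 0 <= x < y -> x ^ S n < y ^ S n.
Proof.
  intros H. induction n.
  - simpl. lra.
  - change (x * x ^ S n < y * y ^ S n).
    assert (0 <= x ^ S n) by (apply pow_le; lra). nra.
Qed.

Lemma lim_ge (U : nat -> R) a L : (forall n, a <= U n) -> Un_cv U L -> a <= L.
Proof.
  intros H HU. apply (Rle_cv_lim (Un:=fun _ => a) (Vn:=U)); auto.
  intros eps Heps. exists 0%nat. intros n _. unfold R_dist. rewrite Rminus_diag, Rabs_R0. lra.
Qed.

Lemma div_le_mono s A B : 0 <= s -> 0 < A <= B -> s / B <= s / A.
Proof.
  intros Hs HA. unfold Rdiv. apply Rmult_le_compat_l; auto.
  apply Rinv_le_contravar; lra.
Qed.

Lemma Hk_pos l r N k : (3 <= N)%nat -> (l = 0 \/ l = 1)%nat -> (1 <= r)%nat ->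
  Nat.odd (r + l) = true -> (1 <= k)%nat -> (2 * k < N)%nat -> 0 < Hk l r N k.
Proof.
  intros HN Hl Hr Hodd Hk1 Hk2.
  assert (HNR : 0 < INR N) by (apply lt_0_INR; lia).
  assert (HkR : 0 < INR k) by (apply lt_0_INR; lia).
  assert (HkN : INR k < INR N) by (apply lt_INR; lia).
  set (s := sin (PI * INR k / INR N)).
  assert (Hs : 0 < s).
  { apply sin_gt_0.
    - apply Rdiv_lt_0_compat; [|lra]. pose proof PI_RGT_0. nra.
    - apply (Rmult_lt_reg_r (INR N)); auto. unfold Rdiv.
      rewrite Rmult_assoc, Rinv_l, Rmult_1_r by lra. pose proof PI_RGT_0. nra. }
  change (0 < sigma N r k + series1 (useq l r N k)).
  pose proof (series1_spec _ (useq_conv l r N k Hr ltac:(lia))) as Hsp.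
  set (S0 := series1 (useq l r N k)) in *.
  rewrite sigma_k by lia. fold s.
  assert (Hsk : 0 < s / INR k) by (apply Rdiv_lt_0_compat; lra).
  destruct Hl as [-> | ->].
  - rewrite Nat.add_0_r in Hodd. apply Nat.odd_spec in Hodd. destruct Hodd as [a Ha].
    assert (Hev : forall x, 0 <= x ^ (1 + r)).
    { intros x. replace (1 + r)%nat with (2 * (a + 1))%nat by lia.
      rewrite pow_mult. apply pow_le. nra. }
    assert (H1 : useq 0 r N k 1 <= S0).
    { apply (sum_incr (fun n => useq 0 r N k (S n)) 0 S0 Hsp).
      intros n. unfold useq. rewrite Nat.mul_0_r. simpl pow. rewrite Rmult_1_l.
      unfold sigma. pose proof (Hev (sin (hstep N * INR (S n * N + k) / 2) / INR (S n * N + k))).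
      pose proof (Hev (sin (hstep N * INR (S n * N - k) / 2) / INR (S n * N - k))). lra. }
    assert (H0 : 0 <= useq 0 r N k 1).
    { unfold useq. rewrite Nat.mul_0_r. simpl pow. rewrite Rmult_1_l.
      unfold sigma. pose proof (Hev (sin (hstep N * INR (1 * N + k) / 2) / INR (1 * N + k))).
      pose proof (Hev (sin (hstep N * INR (1 * N - k) / 2) / INR (1 * N - k))). lra. }
    assert (0 < (s / INR k) ^ (1 + r)) by (apply pow_lt; lra).
    lra.
  - rewrite Nat.add_1_r in Hodd. rewrite Nat.odd_succ in Hodd. apply Nat.even_spec in Hodd.
    destruct Hodd as [a ->].
    replace (1 + 2 * a)%nat with (S (2 * a)) by lia.
    set (c := fun m : nat => (s / INR (m * N + k)) ^ S (2 * a)).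
    set (b := fun m : nat => (s / INR (m * N - k)) ^ S (2 * a)).
    assert (Hu : forall m, (1 <= m)%nat -> useq 1 (2 * a) N k m = c m - b m).
    { intros m Hm. unfold useq. rewrite sigma_plus, sigma_minus by nia. fold s.
      replace (1 + 2 * a)%nat with (S (2 * a)) by lia.
      rewrite Nat.mul_1_r. rewrite !pow_odd_sign by apply sign_sq.
      replace (- (s / INR (m * N - k))) with (-1 * (s / INR (m * N - k))) by ring.
      rewrite pow_odd_sign by ring. unfold c, b.
      replace (1 + 2 * a)%nat with (S (2 * a)) by lia.
      pose proof (sign_sq m). fold s.
      set (e := (-1) ^ m) in *. set (X := (s / INR (m * N + k)) ^ S (2 * a)).
      set (Y := (s / INR (m * N - k)) ^ S (2 * a)).
      transitivity ((e * e) * (X - Y)); [ring|]. rewrite H. ring. }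
    assert (Hc0 : forall m, 0 <= c m).
    { intros m. unfold c. apply pow_le. apply Rmult_le_pos; [lra|].
      apply Rlt_le, Rinv_0_lt_compat. rewrite plus_INR. pose proof (pos_INR (m * N)). lra. }
    assert (Hmono : forall M, b (S (S M)) <= c (S M)).
    { intros M. unfold b, c. apply pow_incr. split.
      - apply Rmult_le_pos; [lra|]. apply Rlt_le, Rinv_0_lt_compat, lt_0_INR. nia.
      - apply div_le_mono; [lra|]. split.
        + apply lt_0_INR. nia.
        + apply le_INR. nia. }
    assert (Hpart : forall M, - b 1%nat + c (S M) <= sum_f_R0 (fun n => useq 1 (2 * a) N k (S n)) M).
    { induction M.
      - simpl sum_f_R0. rewrite Hu by lia. lra.
      - rewrite tech5. rewrite (Hu (S (S M))) by lia. pose proof (Hmono M). lra. }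
    assert (HS : - b 1%nat <= S0).
    { apply (lim_ge (fun M => sum_f_R0 (fun n => useq 1 (2 * a) N k (S n)) M)); [|exact Hsp].
      intros M. pose proof (Hpart M). pose proof (Hc0 (S M)). lra. }
    assert (Hb1 : b 1%nat < (s / INR k) ^ S (2 * a)).
    { unfold b. apply pow_lt_S. split.
      - apply Rmult_le_pos; [lra|]. apply Rlt_le, Rinv_0_lt_compat, lt_0_INR. lia.
      - unfold Rdiv. apply Rmult_lt_compat_l; [lra|]. apply Rinv_lt_contravar.
        + apply Rmult_lt_0_compat; [lra|]. apply lt_0_INR; lia.
        + apply lt_INR. lia. }
    lra.
Qed.

Lemma node_diff l N i j : (l = 0 \/ l = 1)%nat -> (1 <= N)%nat ->
  node l N i - node l N j = 2 * PI / INR N * (INR i - INR j).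
Proof.
  intros Hl HN. assert (0 < INR N) by (apply lt_0_INR; lia).
  destruct Hl as [-> | ->]; unfold node; simpl; field; lra.
Qed.

Lemma cos_shift x a b : cos (x + 2 * INR a * PI - 2 * INR b * PI) = cos x.
Proof.
  replace (x + 2 * INR a * PI - 2 * INR b * PI) with ((x - 2 * INR b * PI) + 2 * INR a * PI) by ring.
  rewrite cos_period.
  rewrite <- (cos_period (x - 2 * INR b * PI) b). f_equal. ring.
Qed.

Lemma Ck_node l r N i j k : (l = 0 \/ l = 1)%nat -> (1 <= N)%nat -> (1 <= r)%nat ->
  (1 <= k)%nat -> (k < N)%nat ->
  Ck l r N j k (node l N i) = cos (INR k * (node l N i - node l N j)) * Hk l r N k.
Proof.
  intros Hl HN Hr Hk1 Hk2.
  assert (HNR : 0 < INR N) by (apply lt_0_INR; lia).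
  unfold Ck, Hk. rewrite (node_diff l N i j Hl HN).
  set (d := 2 * PI / INR N * (INR i - INR j)).
  rewrite (series1_ext _ (fun m => cos (INR k * d) * useq l r N k m)).
  - rewrite series1_scal by (apply useq_conv; lia). unfold useq. ring.
  - intros n. unfold useq.
    replace (cos (INR (S n * N + k) * d)) with (cos (INR k * d)).
    2:{ rewrite <- (cos_shift (INR k * d) (S n * i) (S n * j)). f_equal.
        unfold d. rewrite plus_INR, !mult_INR. field. lra. }
    replace (cos (INR (S n * N - k) * d)) with (cos (INR k * d)).
    2:{ rewrite <- cos_neg. rewrite <- (cos_shift (- (INR k * d)) (S n * i) (S n * j)). f_equal.
        unfold d. rewrite minus_INR by nia. rewrite !mult_INR. field. lra. }
    ring.
Qed.

Theorem mainTheorem4 (N l r q : nat) :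
  (3 <= N)%nat -> Nat.odd N = true ->
  (l = 0 \/ l = 1)%nat ->
  (1 <= r)%nat -> Nat.odd (r + l) = true ->
  (q <= (N - 1) / 2)%nat ->
  (forall i j : nat, (1 <= i <= N)%nat -> (1 <= j <= N)%nat ->
     ts l r N q j (node l N i) = phi l N q j (node l N i)) /\
  (forall (f : nat -> R) (i : nat), (1 <= i <= N)%nat ->
     Ts l r N q f (node l N i) = Tq l N q f (node l N i)).
Proof.
  intros HN Hodd Hl Hr Hrl Hq.
  assert (Hq2 : (2 * q < N)%nat).
  { pose proof (Nat.Div0.mul_div_le (N - 1) 2). lia. }
  assert (P1 : forall i j : nat, (1 <= i <= N)%nat -> (1 <= j <= N)%nat ->
     ts l r N q j (node l N i) = phi l N q j (node l N i)).
  { intros i j Hi Hj. unfold ts, phi. f_equal. f_equal. f_equal.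
    apply sumR_ext. intros k Hkq.
    rewrite Ck_node by lia.
    assert (0 < Hk l r N k) by (apply Hk_pos; auto; lia).
    field. lra. }
  split; auto.
  intros f i Hi. unfold Ts, Tq. apply sumR_ext. intros j Hj. rewrite P1; auto.
Qed.
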